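(* Let $$A=\begin{bmatrix}1&1&1&1\\1&1&1&1\\1&0&0&0\end{bmatrix}.$$ For every integer $k\geq 1$ there exists an integer $m\leq 64k+1$ such that $$\mathrm{forb}(m,A)\geq \frac53\binom{m}{2}+\binom{m}{1}+\binom{m}{0}+k.$$
   Context: A simple $0$-$1$ matrix is one with no repeated columns; an $m\times n$ simple $0$-$1$ matrix is identified with a family of $n$ distinct subsets of $[m]$ (rows index elements, columns index sets). A matrix $M$ has configuration $F$ if some submatrix of $M$ is a row and column permutation of $F$. $\mathrm{forb}(m,F)$ denotes the maximum number of columns of an $m$-rowed simple $0$-$1$ matrix that does not have configuration $F$. A triple system of order $m$ and multiplicity $\lambda$ is a family of $3$-element subsets (blocks) of an $m$-element set in which every pair of distinct elements lies in exactly $\lambda$ blocks. *)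

(* Defs.v *)
From HB Require Import structures.
From mathcomp Require Import all_boot all_order all_algebra.
Set Implicit Arguments. Unset Strict Implicit. Unset Printing Implicit Defensive.

(* A simple m-rowed 0-1 matrix = a family of distinct subsets of [m] = 'I_m
   (rows = elements, columns = sets).
   [has_config F S]: some submatrix of S is a row and column permutation of
   the p x q 0-1 matrix F, i.e. there are p distinct rows r and q distinct
   columns c of S with F i j = (r i \in c j). *)
Definition has_config (p q m : nat) (F : 'M[bool]_(p, q)) (S : {set {set 'I_m}}) : bool :=
  [exists r : {ffun 'I_p -> 'I_m}, exists c : {ffun 'I_q -> {set 'I_m}},
    [&& injectiveb r, injectiveb c, [forall j, c j \in S]
      & [forall i, forall j, F i j == (r i \in c j)]]].

Definition forb (p q : nat) (m : nat) (F : 'M[bool]_(p, q)) : nat :=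
  \max_(S : {set {set 'I_m}} | ~~ has_config F S) #|S|.

(* A = [1 1 1 1; 1 1 1 1; 1 0 0 0] *)
Definition A_mat : 'M[bool]_(3, 4) :=
  \matrix_(i < 3, j < 4) ((nat_of_ord i != 2%N) || (nat_of_ord j == 0%N)).

(* Main.v *)
Require Import Defs.
From HB Require Import structures.
From mathcomp Require Import all_boot all_order all_algebra.
From mathcomp Require Import zify ring lra.
Set Implicit Arguments. Unset Strict Implicit. Unset Printing Implicit Defensive.

Definition Afree (V : finType) (F : {set {set V}}) :=
  forall X (a b c : V) Y1 Y2 Y3, X \in F -> a \in X -> b \in X -> c \in X ->
  a != b -> a != c -> b != c ->
  Y1 \in F -> Y2 \in F -> Y3 \in F ->
  a \in Y1 -> b \in Y1 -> c \notin Y1 ->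
  a \in Y2 -> b \in Y2 -> c \notin Y2 ->
  a \in Y3 -> b \in Y3 -> c \notin Y3 ->
  Y1 != Y2 -> Y1 != Y3 -> Y2 != Y3 -> False.

Lemma mem_rank (V : finType) (Y : {set V}) (x : 'I_#|V|) :
  (x \in enum_rank @: Y) = (enum_val x \in Y).
Proof.
apply/imsetP/idP => [[y Hy ->]|H]; first by rewrite enum_rankK.
by exists (enum_val x) => //; rewrite enum_valK.
Qed.

Lemma forb_ge (V : finType) (F : {set {set V}}) :
  Afree F -> #|F| <= forb #|V| A_mat.
Proof.
move=> HF.
pose S := (fun Y : {set V} => enum_rank @: Y) @: F.
have -> : #|F| = #|S| by rewrite card_imset //; apply: imset_inj; exact: enum_rank_inj.
rewrite /forb; apply: (@leq_bigmax_cond _ (fun S0 => ~~ has_config A_mat S0) (fun S0 => #|S0|) S).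
apply/negP => /existsP [r /existsP [c /and4P [/injectiveP ri /injectiveP ci /forallP cS /forallP H]]].
have HA i j : A_mat i j = (r i \in c j) by apply/eqP; move: (H i) => /forallP.
pose i0 := @Ordinal 3 0 isT. pose i1 := @Ordinal 3 1 isT. pose i2 := @Ordinal 3 2 isT.
pose j0 := @Ordinal 4 0 isT. pose j1 := @Ordinal 4 1 isT. pose j2 := @Ordinal 4 2 isT.
pose j3 := @Ordinal 4 3 isT.
have getY j : exists2 Y, Y \in F & c j = enum_rank @: Y by apply/imsetP; exact: cS.
have [X XF eX] := getY j0. have [Y1 Y1F eY1] := getY j1.
have [Y2 Y2F eY2] := getY j2. have [Y3 Y3F eY3] := getY j3.
have mem i j (Y : {set V}) : c j = enum_rank @: Y -> (enum_val (r i) \in Y) = A_mat i j.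
  by move=> e; rewrite HA e mem_rank.
have evinj (x y : 'I_#|V|) : x != y -> enum_val x != enum_val y.
  by apply: contra => /eqP e; rewrite -(enum_valK x) e enum_valK.
have rne i i' : i != i' -> enum_val (r i) != enum_val (r i').
  by move=> ne; apply: evinj; apply: contra ne => /eqP /ri ->.
have cne j j' (Y Y' : {set V}) : c j = enum_rank @: Y -> c j' = enum_rank @: Y' -> j != j' -> Y != Y'.
  by move=> e e' ne; apply: contra ne => /eqP E; apply/eqP/ci; rewrite e e' E.
apply: (HF X (enum_val (r i0)) (enum_val (r i1)) (enum_val (r i2)) Y1 Y2 Y3) => //.
all: try by rewrite (mem _ _ _ eX) mxE.
all: try by rewrite (mem _ _ _ eY1) mxE.
all: try by rewrite (mem _ _ _ eY2) mxE.
all: try by rewrite (mem _ _ _ eY3) mxE.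
all: try by apply: rne.
- exact: (cne _ _ _ _ eY1 eY2).
- exact: (cne _ _ _ _ eY1 eY3).
- exact: (cne _ _ _ _ eY2 eY3).

Qed.


Definition F4 := (bool * bool)%type.
Definition fadd (a b : F4) : F4 := (a.1 (+) b.1, a.2 (+) b.2).
Definition fmul (a b : F4) : F4 :=
  ((a.1 && b.1) (+) (a.1 && b.2) (+) (a.2 && b.1), (a.1 && b.1) (+) (a.2 && b.2)).
Definition finv (a : F4) : F4 := (a.1, a.1 (+) a.2).
Definition f0 : F4 := (false, false).
Definition f1 : F4 := (false, true).

Lemma faddI p a b : (fadd p a == fadd p b) = (a == b).
Proof. by case: p a b => [[] []] [[] []] [[] []]. Qed.
Lemma fadd_eq0 a b : (fadd a b == f0) = (a == b).
Proof. by case: a b => [[] []] [[] []]. Qed.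
Lemma fmulI a b c : c != f0 -> (fmul a c == fmul b c) = (a == b).
Proof. by case: a b c => [[] []] [[] []] [[] []]. Qed.
Lemma fkey p a b mu d :
  fadd (fadd p (fmul a d)) (fmul mu (fadd (fadd p (fmul b d)) (fadd p (fmul a d))))
  = fadd p (fmul (fadd a (fmul mu (fadd b a))) d).
Proof. by case: p a b mu d => [[] []] [[] []] [[] []] [[] []] [[] []]. Qed.
Lemma fsolve a b nu : a != b -> fadd a (fmul (fmul (fadd nu a) (finv (fadd b a))) (fadd b a)) = nu.
Proof. by case: a b nu => [[] []] [[] []] [[] []]. Qed.
Lemma fmul0 x y : fadd x (fmul f0 y) = x.
Proof. by case: x y => [[] []] [[] []]. Qed.
Lemma fmul1 x y : fadd x (fmul f1 (fadd y x)) = y.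
Proof. by case: x y => [[] []] [[] []]. Qed.
Lemma card_F4 : #|{: F4}| = 4.
Proof. by rewrite card_prod card_bool. Qed.

Section Geo.
Variable t : nat.
Definition V := {ffun 'I_t -> F4}.
Definition lpt (p q : V) (l : F4) : V := [ffun i => fadd (p i) (fmul l (fadd (q i) (p i)))].
Definition Lpq (p q : V) : {set V} := [set lpt p q l | l : F4].

Lemma lpt0 p q : lpt p q f0 = p.
Proof. by apply/ffunP => i; rewrite ffunE fmul0. Qed.
Lemma lpt1 p q : lpt p q f1 = q.
Proof. by apply/ffunP => i; rewrite ffunE fmul1. Qed.
Lemma Lpq_p p q : p \in Lpq p q.
Proof. by apply/imsetP; exists f0 => //; rewrite lpt0. Qed.
Lemma Lpq_q p q : q \in Lpq p q.
Proof. by apply/imsetP; exists f1 => //; rewrite lpt1. Qed.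

Lemma Lpq_sub p q r s : r \in Lpq p q -> s \in Lpq p q -> r != s -> Lpq r s = Lpq p q.
Proof.
move=> /imsetP [a _ ->] /imsetP [b _ ->] ne.
have ab : a != b by apply: contra ne => /eqP ->.
have E mu : lpt (lpt p q a) (lpt p q b) mu = lpt p q (fadd a (fmul mu (fadd b a))).
  by apply/ffunP => i; rewrite !ffunE fkey.
apply/setP => x; apply/imsetP/imsetP => [[mu _ ->]|[nu _ ->]].
  by exists (fadd a (fmul mu (fadd b a))) => //; rewrite E.
exists (fmul (fadd nu a) (finv (fadd b a))) => //; rewrite E fsolve //.
Qed.

Lemma lpt_inj p q : p != q -> injective (lpt p q).
Proof.
move=> ne a b e.
have [i ni] : exists i, p i != q i.
  apply/existsP; move: ne; apply: contraR => /existsPn H.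
  by apply/eqP/ffunP => i; move: (H i); rewrite negbK => /eqP.
move/ffunP: e => /(_ i); rewrite !ffunE => /eqP; rewrite faddI fmulI ?fadd_eq0 1?eq_sym //.
by move/eqP.
Qed.

Lemma card_Lpq p q : p != q -> #|Lpq p q| = 4.
Proof. by move=> ne; rewrite card_imset ?card_F4 //; apply: lpt_inj. Qed.
Lemma card_Lpq_le p q : #|Lpq p q| <= 4.
Proof. by rewrite -card_F4; apply: leq_imset_card. Qed.

Definition D : {set V * V} := [set pq | pq.1 != pq.2].
Definition Lof (pq : V * V) := Lpq pq.1 pq.2.
Definition lines : {set {set V}} := Lof @: D.

Lemma lineP L : L \in lines -> exists p q, [/\ p != q & L = Lpq p q].
Proof. by move=> /imsetP [[p q] H ->]; exists p, q; rewrite inE in H. Qed.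

Lemma line_card L : L \in lines -> #|L| = 4.
Proof. by move=> /lineP [p [q [ne ->]]]; apply: card_Lpq. Qed.
Lemma line_card_le L : L \in lines -> #|L| <= 4.
Proof. by move=> /lineP [p [q [ne ->]]]; apply: card_Lpq_le. Qed.

Lemma line_uniq L L' a b : L \in lines -> L' \in lines -> a \in L -> b \in L ->
  a \in L' -> b \in L' -> a != b -> L = L'.
Proof.
move=> /lineP [p [q [_ ->]]] /lineP [p' [q' [_ ->]]] aL bL aL' bL' ab.
by rewrite -(Lpq_sub aL bL ab) (Lpq_sub aL' bL' ab).
Qed.

Definition G : {set {set V}} := [set Y : {set V} | (2 < #|Y|) && [exists L in lines, Y \subset L]].
Definition FF : {set {set V}} := [set Y : {set V} | #|Y| <= 2] :|: G.

Lemma pair_eq (Y : {set V}) a b : a \in Y -> b \in Y -> a != b -> #|Y| <= 2 -> Y = [set a; b].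
Proof.
move=> aY bY ab c2; apply/esym/eqP; rewrite eqEcard cards2 ab c2 andbT.
by apply/subsetP => x; rewrite !inE => /orP [] /eqP ->.
Qed.

Lemma FF_Afree : Afree FF.
Proof.
move=> X a b c Y1 Y2 Y3 XF aX bX cX ab ac bc F1 F2 F3 a1 b1 c1 a2 b2 c2 a3 b3 c3 n12 n13 n23.
have : 2 < #|X|.
  rewrite ltnNge; apply/negP => X2; move: cX; rewrite (pair_eq aX bX ab X2) !inE.
  by rewrite !(eq_sym c) (negbTE ac) (negbTE bc).
move=> X3; move: XF; rewrite !inE => /orP [X2|]; first by move: (leq_trans X3 X2); rewrite ltnn.
case/andP => _ /existsP [L /andP [Lline XL]].
have key Y : Y \in FF -> a \in Y -> b \in Y -> c \notin Y -> (Y == [set a; b]) || (Y == L :\ c).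
  rewrite !inE => /orP [Ys aY bY _|/andP [Yb /existsP [L' /andP [L'line YL']]] aY bY cY].
    by rewrite (pair_eq aY bY ab Ys) eqxx.
  have E : L' = L.
    by apply: (line_uniq L'line Lline (subsetP YL' _ aY) (subsetP YL' _ bY)
      (subsetP XL _ aX) (subsetP XL _ bX) ab).
  subst L'; apply/orP; right; rewrite eqEcard; apply/andP; split.
    by apply/subsetP => x xY; rewrite !inE (subsetP YL' _ xY) andbT; apply: contraNneq cY => <-.
  have := cardsD1 c L; rewrite (subsetP XL _ cX) (line_card Lline) add1n => [[<-]].
  exact: Yb.
move: n12 n13 n23.
case/orP: (key _ F1 a1 b1 c1) => /eqP ->; case/orP: (key _ F2 a2 b2 c2) => /eqP ->;
  case/orP: (key _ F3 a3 b3 c3) => /eqP ->; by rewrite !eqxx.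
Qed.
Definition diag : {set V * V} := [set pq | pq.1 == pq.2].

Lemma card_diagA (A : {set V}) : #|setX A A :&: diag| = #|A|.
Proof.
have -> : setX A A :&: diag = (fun x => (x, x)) @: A.
  apply/setP => [[x y]]; rewrite !inE /=; apply/idP/imsetP.
    by case/andP => /andP [xA _] /eqP <-; exists x.
  by case=> z zA [-> ->]; rewrite zA eqxx.
by rewrite card_imset // => x y [].
Qed.

Lemma card_D : #|D| + #|V| = #|V| * #|V|.
Proof.
have := card_diagA [set: V]; rewrite cardsT => E.
have -> : D = ~: (setX [set: V] [set: V] :&: diag).
  by apply/setP => pq; rewrite !inE.
by rewrite addnC -{1}E cardsC card_prod.
Qed.

Definition fib (L : {set V}) : {set V * V} := [set pq | [&& pq.1 \in L, pq.2 \in L & pq.1 != pq.2]].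

Lemma card_fib (L : {set V}) : L \in lines -> #|fib L| = 12.
Proof.
move=> Ll; have := cardsID diag (setX L L); rewrite card_diagA cardsX line_card //.
have -> : setX L L :\: diag = fib L by apply/setP => pq; rewrite !inE andbC andbA.
by move=> H; apply/eqP; rewrite -(eqn_add2l 4) H.
Qed.

Lemma card_D_lines : #|D| = 12 * #|lines|.
Proof.
rewrite -sum1_card (partition_big Lof (fun L => L \in lines)); last first.
  by move=> pq pD; apply: imset_f.
rewrite mulnC -sum_nat_const; apply: eq_bigr => L Ll.
rewrite -(card_fib Ll) -sum1_card; apply: eq_bigl => [[p q]].
rewrite !inE /Lof /=; apply/idP/idP.
  by case/andP => pq /eqP <-; rewrite Lpq_p Lpq_q pq.
case/and3P => pL qL pq; rewrite pq /=; move: Ll => /lineP [a [b [_ E]]].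
by rewrite E in pL qL *; rewrite (Lpq_sub pL qL pq).
Qed.

Definition lineof (Y : {set V}) : {set V} := odflt set0 [pick L in lines | Y \subset L].

Definition subs (L : {set V}) : {set {set V}} := [set Y : {set V} | (Y \subset L) && (2 < #|Y|)].

Lemma card_subs (L : {set V}) : #|L| = 4 -> #|subs L| = 5.
Proof.
move=> L4.
have -> : subs L = [set Y : {set V} | Y \subset L & #|Y| == 3] :|: [set Y : {set V} | Y \subset L & #|Y| == 4].
  apply/setP => Y; rewrite !inE; case YL: (Y \subset L) => //=.
  move: (subset_leq_card YL); rewrite L4.
  by case: #|Y| => [|[|[|[|[|n]]]]].
rewrite cardsU !cards_draws L4.
have -> : #|[set Y : {set V} | Y \subset L & #|Y| == 3] :&: [set Y : {set V} | Y \subset L & #|Y| == 4]| = 0.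
  apply: eq_card0 => Y; rewrite !inE; case: (Y \subset L) => //=.
  by case: (#|Y| == 3) / eqP => // ->.
by [].
Qed.

Lemma card_G : #|G| = 5 * #|lines|.
Proof.
rewrite -sum1_card (partition_big lineof (fun L => L \in lines)); last first.
  move=> Y; rewrite inE => /andP [_ /existsP [L /andP [Ll YL]]].
  rewrite /lineof; case: pickP => [L' /andP [] //|/(_ L)]; by rewrite Ll YL.
rewrite mulnC -sum_nat_const; apply: eq_bigr => L Ll.
rewrite -(card_subs (line_card Ll)) -sum1_card; apply: eq_bigl => Y.
rewrite !inE /lineof; case: pickP => [L' /andP [L'l YL']|H] /=.
  apply/idP/idP.
    by case/andP => /andP [Y3 _] /eqP E; subst L'; rewrite YL' Y3.
  case/andP => YL Y3; rewrite Y3 /=; apply/andP; split.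
    by apply/existsP; exists L; rewrite Ll YL.
  have Y1 : 1 < #|Y| by apply: ltnW.
  case/card_gt1P: Y1 => a [b [aY bY ab]].
  by apply/eqP; apply: (line_uniq L'l Ll (subsetP YL' _ aY) (subsetP YL' _ bY)
      (subsetP YL _ aY) (subsetP YL _ bY) ab).
apply/idP/idP.
  case/andP => /andP [_ /existsP [L0 /andP [L0l YL0]]]; by move: (H L0); rewrite L0l YL0.
case/andP => YL _; by move: (H L); rewrite Ll YL.
Qed.

Lemma card_FF : #|FF| = 'C(#|V|, 0) + 'C(#|V|, 1) + 'C(#|V|, 2) + #|G|.
Proof.
have Hs : [set Y : {set V} | #|Y| <= 2] = ([set Y : {set V} | #|Y| == 0] :|: [set Y : {set V} | #|Y| == 1]) :|: [set Y : {set V} | #|Y| == 2].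
  by apply/setP => Y; rewrite !inE; case: #|Y| => [|[|[|n]]].
have disj (A B : {set {set V}}) : (forall Y, Y \in A -> Y \in B -> False) -> #|A :|: B| = #|A| + #|B|.
  move=> H; rewrite cardsU; suff -> : #|A :&: B| = 0 by rewrite subn0.
  apply: eq_card0 => Y; rewrite inE; apply/negP => /andP [] /H H1 /H1.
  done.
rewrite /FF disj; last first.
  by move=> Y; rewrite !inE => Y2 /andP [Y3 _]; move: (leq_trans Y3 Y2).
rewrite Hs !disj ?card_draws //.
all: move=> Y; rewrite !inE; try case/orP; move=> /eqP -> //.
Qed.
End Geo.


Lemma exists_t k : 1 <= k -> exists t, [/\ 0 < t, 12 * k <= 4 ^ t * (4 ^ t).-1 & 4 ^ t <= 64 * k].
Proof.
move=> hk.
have ex : exists t, 12 * k <= 4 ^ t * (4 ^ t).-1.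
  exists k.+1; have h1 : k < 4 ^ k by apply: ltn_expl.
  rewrite expnS; nia.
case: (ex_minnP ex) => t Pt tmin.
case: t Pt tmin => [|t] Pt tmin; first by rewrite expn0 /= muln0 in Pt; lia.
exists t.+1; split => //.
have nP : ~~ (12 * k <= 4 ^ t * (4 ^ t).-1).
  by apply/negP => /tmin; rewrite ltnn.
rewrite expnS; move: nP; have := expn_gt0 4 t; nia.
Qed.

Import Order.TTheory GRing.Theory Num.Theory.

Theorem mainTheorem3 (k : nat) (hk : (1 <= k)%N) :
  exists m : nat, (m <= 64 * k + 1)%N /\
    ((5%:R / 3%:R) * ('C(m, 2))%:R + ('C(m, 1))%:R + ('C(m, 0))%:R + k%:R
      <= (forb m A_mat)%:R :> rat)%R.
Proof.
have [t [t0 Hk Hm]] := exists_t hk.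
have cV : #|V t| = 4 ^ t by rewrite card_ffun card_F4 card_ord.
exists #|V t|; split; first by rewrite cV; lia.
have Hf := forb_ge (@FF_Afree t).
have e1 := card_D t. have e2 := card_D_lines t.
have e3 := card_FF t. have e4 := card_G t.
have e5 := mul_bin_diag #|V t| 1. rewrite bin1 in e5.
rewrite bin1 bin0 in e3 *.
set m := #|V t| in cV e1 e3 e5 Hf *.
set C := 'C(m, 2) in e3 e5 *.
set l := #|lines t| in e2 e4.
set N := forb m A_mat in Hf *.
have key : (5 * C + 3 * m + 3 + 3 * k <= 3 * N)%N.
  rewrite cV in e1 e5 Hk; nia.
have : (((5 * C + 3 * m + 3 + 3 * k)%N)%:R <= ((3 * N)%N)%:R :> rat)%R by rewrite ler_nat.
move=> H; rewrite !natrD ?natrM in H; lra.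
Qed.
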